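(* Let $p<q$ be odd primes. Then $n=pq$ is a Gaussian Carmichael number if and only if $q=p+2$ and $8$ divides $p+q$.
   Context: The function $\mathcal{F}$ is defined by $\mathcal{F}(n)=n-1$ if $n\equiv 1\pmod 4$, $\mathcal{F}(n)=n+1$ if $n\equiv 3 \pmod 4$, $\mathcal{F}(n)=n$ otherwise. A composite integer $n$ is a Gaussian Fermat pseudoprime to base $z\in\mathbb{Z}[i]$ if $\gcd(n,z\overline{z})=1$ and $(z/\overline{z})^{\mathcal{F}(n)}\equiv 1\pmod n$ in $\mathbb{Z}[i]/n\mathbb{Z}[i]$. A composite $n$ is a Gaussian Carmichael number if it is a Gaussian Fermat pseudoprime to base $z$ for every $z\in\mathbb{Z}[i]$ with $\gcd(n,z\overline{z})=1$. *)

(* Defs.v *)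
(* Gaussian integers Z[i] are represented as pairs (a, b) : int * int
   standing for a + b i. *)
From HB Require Import structures.
From mathcomp Require Import all_boot all_order all_algebra.
Set Implicit Arguments. Unset Strict Implicit. Unset Printing Implicit Defensive.
Import Order.TTheory GRing.Theory Num.Theory.

Local Open Scope ring_scope.

Definition gauss := (int * int)%type.

Definition gconj (z : gauss) : gauss := (z.1, - z.2).
Definition gmul (z w : gauss) : gauss :=
  (z.1 * w.1 - z.2 * w.2, z.1 * w.2 + z.2 * w.1).
Definition gone : gauss := (1, 0).
Definition gexp (z : gauss) (k : nat) : gauss := iter k (gmul z) gone.

Definition gnorm (z : gauss) : nat := absz (z.1 ^+ 2 + z.2 ^+ 2).

(* congruence in Z[i] modulo the rational integer n: n divides z - w in Z[i] *)
Definition gcongr (n : nat) (z w : gauss) : Prop :=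
  ((z.1 == w.1 %[mod n%:Z])%Z) /\ ((z.2 == w.2 %[mod n%:Z])%Z).

Local Close Scope ring_scope.

Definition calF (n : nat) : nat :=
  if n %% 4 == 1 then n.-1 else if n %% 4 == 3 then n.+1 else n.

Definition composite (n : nat) : bool := (1 < n) && ~~ prime n.

(* (z / conj z)^F(n) = 1 in Z[i]/nZ[i]; the quotient z / conj z is any
   w with w * conj z = z mod n (it exists and is unique mod n since
   conj z is invertible mod n when gcd(n, z conj z) = 1). *)
Definition gauss_fermat_psp (n : nat) (z : gauss) : Prop :=
  composite n /\ coprime n (gnorm z) /\
  (forall w : gauss, gcongr n (gmul w (gconj z)) z ->
     gcongr n (gexp w (calF n)) gone).

Definition gauss_carmichael (n : nat) : Prop :=
  composite n /\
  (forall z : gauss, coprime n (gnorm z) -> gauss_fermat_psp n z).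

(* Main.v *)
Require Import Defs.
From mathcomp Require Import all_boot all_order all_algebra all_field all_solvable.
From mathcomp Require Import ring lra zify.
Require Import Defs.
Set Implicit Arguments. Unset Strict Implicit. Unset Printing Implicit Defensive.
Import Order.TTheory GRing.Theory Num.Theory.

Local Open Scope ring_scope.

Definition phi (L : comRingType) (i : L) (z : gauss) : L := z.1%:~R + z.2%:~R * i.

Section Phi.
Variables (L : comRingType) (i : L).
Hypothesis hi : i * i = -1.

Lemma phi_mul z w : phi i (gmul z w) = phi i z * phi i w.
Proof.
rewrite /phi /gmul /=. rewrite !(intrD, intrM, intrB, intrN).
have id1 (a b c d j : L) : (a*c - b*d) + (a*d + b*c)*j = (a+b*j)*(c+d*j) - b*d*(j*j+1) by ring.
by rewrite id1 hi addNr mulr0 subr0.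
Qed.

Lemma phi_one : phi i gone = 1.
Proof. by rewrite /phi /= mul0r addr0. Qed.

Lemma phi_exp z k : phi i (gexp z k) = phi i z ^+ k.
Proof.
elim: k => [|k IH]; first by rewrite expr0 phi_one.
by rewrite /gexp iterS -/(gexp z k) phi_mul IH exprS.
Qed.

Lemma phi_conj z : phi i (gconj z) = phi (- i) z.
Proof. by rewrite /phi /= intrN; ring. Qed.

Lemma phi_norm z : (gnorm z)%:R = phi i z * phi (-i) z.
Proof.
have h : (0 <= z.1 ^+ 2 + z.2 ^+ 2 :> int) by rewrite addr_ge0 // sqr_ge0.
have -> : (gnorm z)%:R = (z.1 ^+ 2 + z.2 ^+ 2)%:~R :> L.
  by rewrite -[LHS]/((gnorm z)%:Z%:~R) /gnorm abszE ger0_norm.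
rewrite /phi intrD !expr2 !intrM -!expr2.
have id2 (a b j : L) : a ^+ 2 + b ^+ 2 = (a + b * j) * (a + b * - j) + b^+2 * (j * j + 1) by ring.
by rewrite (id2 _ _ i) hi addNr mulr0 addr0.
Qed.
End Phi.

Lemma intr_eq0_pchar (L : nzRingType) (p : nat) (hp : p \in [pchar L]) (x : int) :
  (x%:~R == 0 :> L) = (p%:Z %| x)%Z.
Proof.
case: x => n; rewrite /dvdz /=.
  by rewrite -(dvdn_pcharf hp).
by rewrite NegzE intrN oppr_eq0 -(dvdn_pcharf hp).
Qed.

Lemma intr_cong_pchar (L : nzRingType) (p : nat) (hp : p \in [pchar L]) (x y : int) :
  (x == y %[mod p%:Z])%Z -> x%:~R = y%:~R :> L.
Proof.
rewrite eqz_mod_dvd -(intr_eq0_pchar hp) intrB subr_eq0.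
by move/eqP.
Qed.

Lemma phi_gcongr (L : comNzRingType) (i : L) (p : nat) (hp : p \in [pchar L]) z w :
  gcongr p z w -> phi i z = phi i w.
Proof.
by case=> h1 h2; rewrite /phi (intr_cong_pchar hp h1) (intr_cong_pchar hp h2).
Qed.

Lemma ipow3 (L : comNzRingType) (i : L) (hi : i * i = -1) (p : nat) :
  (p %% 4 = 3)%N -> i ^+ p = - i.
Proof.
move=> hp; rewrite (divn_eq p 4) hp addnC exprD mulnC exprM.
have -> : i ^+ 4 = 1 by rewrite (_ : 4 = 2 + 2)%N // exprD expr2 hi mulrN1 opprK.
by rewrite expr1n mulr1 (_ : 3 = 2 + 1)%N // exprD expr2 hi expr1 mulN1r.
Qed.

Lemma phi_frob (L : comNzRingType) (i : L) (hi : i * i = -1) (p : nat)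
  (hp : p \in [pchar L]) z : (p %% 4 = 3)%N -> phi i z ^+ p = phi (-i) z.
Proof.
move=> h4; rewrite /phi -(pFrobenius_autE hp) pFrobenius_autD_comm; last exact: mulrC.
rewrite pFrobenius_autM_comm; last exact: mulrC.
by rewrite !pFrobenius_aut_int pFrobenius_autE (ipow3 hi h4).
Qed.

Lemma two_neq0 (L : nzRingType) (p : nat) (hp : p \in [pchar L]) :
  odd p -> (2%:R != 0 :> L).
Proof.
move=> op; rewrite -(dvdn_pcharf hp).
have pp := pcharf_prime hp.
apply/negP=> /(dvdn_leq (isT : (0 < 2)%N)); rewrite leq_eqVlt => /orP [/eqP e|].
  by rewrite e in op.
by case: p pp {hp op} => [|[|]].
Qed.

Lemma phi_inj3 (L : fieldType) (i : L) (hi : i * i = -1) (p : nat)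
  (hp : p \in [pchar L]) (h4 : (p %% 4 = 3)%N) z :
  phi i z = 0 -> (p%:Z %| z.1)%Z /\ (p%:Z %| z.2)%Z.
Proof.
rewrite /phi => h.
have op : odd p by rewrite (divn_eq p 4) h4 oddD oddM andbF.
have hb : z.2%:~R = 0 :> L.
  apply/eqP/negPn/negP => nb.
  have ei : i = (- z.1)%:~R / z.2%:~R.
    apply: (mulIf nb); rewrite divfK // intrN; apply/eqP; rewrite -addr_eq0 mulrC.
    by rewrite addrC h.
  have : i ^+ p = i.
    rewrite {1}ei exprMn exprVn -!(pFrobenius_autE hp) !pFrobenius_aut_int.
    by rewrite -ei.
  rewrite (ipow3 hi h4) => /eqP; rewrite eq_sym -subr_eq0 opprK -mulr2n -mulr_natl.
  rewrite mulf_eq0 (negPf (two_neq0 hp op)) /= => /eqP i0.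
  by move: hi; rewrite i0 mul0r => /eqP; rewrite eq_sym oppr_eq0 oner_eq0.
move: h; rewrite hb mul0r addr0 => /eqP ha.
by split; rewrite -(intr_eq0_pchar hp) ?ha ?hb.
Qed.

Lemma prim_root_ff (F : finFieldType) : exists g : F, (#|F|.-1).-primitive_root g.
Proof.
have n_gt0 : (0 < #|F|.-1)%N by rewrite -ltnS prednK ?finNzRing_gt1 // ltnW // finNzRing_gt1.
have := @has_prim_root F _ (enum (predC1 (0 : F))) n_gt0.
case/(_ _ _ _)/Wrap.
- apply/allP=> x; rewrite mem_enum inE => nx.
  rewrite unity_rootE; apply/eqP; apply: (mulIf nx); rewrite mul1r -exprSr.
  by rewrite prednK ?expf_card // ltnW // finNzRing_gt1.
- exact: enum_uniq.
- by rewrite -cardE cardC1.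
by case/hasP=> g _ pg; exists g.
Qed.

Lemma sqrtm1_ff (F : finFieldType) : (4 %| #|F|.-1)%N -> exists i : F, i * i = -1.
Proof.
move=> h4; have [g pg] := prim_root_ff F.
set n := #|F|.-1 in h4 pg.
have n_gt0 : (0 < n)%N by rewrite /n -ltnS prednK ?finNzRing_gt1 // ltnW // finNzRing_gt1.
exists (g ^+ (n %/ 4)).
set h := g ^+ (n %/ 4) * g ^+ (n %/ 4).
have hh : h ^+ 2 = 1.
  rewrite /h -exprD -exprM; apply/eqP; rewrite -(prim_order_dvd pg).
  by rewrite (_ : ((n %/ 4 + n %/ 4) * 2)%N = n) //; clearbody n; move: h4; clear; lia.
move/eqP: hh; rewrite sqrf_eq1 => /orP [/eqP h1|/eqP //].
exfalso; move: h1; rewrite /h -exprD => /eqP; rewrite -(prim_order_dvd pg) => hd.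
have := dvdn_leq _ hd; rewrite addn_gt0.
have : (0 < n %/ 4)%N by rewrite divn_gt0 // dvdn_leq.
move=> -> /(_ isT); rewrite leqNgt; move/negP; apply.
clearbody n; move: h4 n_gt0; clear; lia.
Qed.

Lemma dvd_small (p d : nat) : (p %| d)%N -> (d < p)%N -> d = 0%N.
Proof.
case: d => // d hd hlt; have := dvdn_leq (isT : (0 < d.+1)%N) hd; lia.
Qed.

Lemma intr_inj_small (L : nzRingType) (p : nat) (hp : p \in [pchar L]) (a b : nat) :
  (a < p)%N -> (b < p)%N -> (a%:R = b%:R :> L) -> a = b.
Proof.
wlog ab : a b / (a <= b)%N.
  move=> H ha hb e; case: (leqP a b) => h; first exact: H.
  by symmetry; apply: H => //; exact: ltnW.
move=> ha hb /eqP; rewrite eq_sym -subr_eq0 -natrB // -(dvdn_pcharf hp) => /dvd_small.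
move/(_ (leq_ltn_trans (leq_subr _ _) hb)) => e; apply/eqP; rewrite eqn_leq ab /=.
by rewrite -subn_eq0 e.
Qed.

Lemma nat_onto (F : finFieldType) (p : nat) (hp : p \in [pchar F]) :
  #|F| = p -> forall x : F, exists a : nat, x = a%:R.
Proof.
move=> cF x.
pose f := fun k : 'I_p => (val k)%:R : F.
have injf : injective f.
  by move=> k k' /(intr_inj_small hp (ltn_ord k) (ltn_ord k')) /val_inj.
have := inj_card_onto injf; rewrite card_ord cF leqnn => /(_ isT x) /codomP [k ->].
by exists (val k).
Qed.

Lemma pair_onto (F : finFieldType) (p : nat) (hp : p \in [pchar F]) (i : F)
  (hi : i * i = -1) : (p %% 4 = 3)%N ->
  #|F| = (p ^ 2)%N -> forall x : F, exists a b : nat, x = phi i (a%:Z, b%:Z).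
Proof.
move=> h4 cF x.
pose f := fun k : 'I_p * 'I_p => phi i ((val k.1)%:Z, (val k.2)%:Z).
have injf : injective f.
  move=> [a b] [a' b'] /eqP; rewrite -subr_eq0 => /eqP e.
  have : phi i ((val a)%:Z - (val a')%:Z, (val b)%:Z - (val b')%:Z) = 0.
    by rewrite -e /f /phi /= !intrB; ring.
  case/(phi_inj3 hi hp h4) => /=; rewrite -!eqz_mod_dvd !modz_nat !eqz_nat.
  rewrite !modn_small // => /eqP e1 /eqP e2.
  by rewrite (val_inj e1) (val_inj e2).
have := inj_card_onto injf; rewrite card_prod !card_ord cF expnS expn1 leqnn.
move=> /(_ isT x) /codomP [[a b] ->].
by exists (val a), (val b).
Qed.

Lemma phi_eq3 (L : fieldType) (i : L) (hi : i * i = -1) (p : nat)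
  (hp : p \in [pchar L]) (h4 : (p %% 4 = 3)%N) z w :
  phi i z = phi i w -> gcongr p z w.
Proof.
move=> e; have : phi i (z.1 - w.1, z.2 - w.2) = 0.
  have -> : phi i (z.1 - w.1, z.2 - w.2) = phi i z - phi i w by rewrite /phi /= !intrB; ring.
  by rewrite e subrr.
by case/(phi_inj3 hi hp h4) => /= h1 h2; split; rewrite eqz_mod_dvd.
Qed.

Lemma phi_eq1 (L : fieldType) (c : L) (hc : c * c = -1) (p : nat)
  (hp : p \in [pchar L]) (op : odd p) z w :
  phi c z = phi c w -> phi (-c) z = phi (-c) w -> gcongr p z w.
Proof.
move=> e1 e2.
set a : L := (z.1 - w.1)%:~R; set b : L := (z.2 - w.2)%:~R.
have h1 : a + b * c = 0.
  by rewrite /a /b !intrB; move/eqP: e1; rewrite -subr_eq0 /phi => /eqP <-; ring.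
have h2 : a - b * c = 0.
  by rewrite /a /b !intrB; move/eqP: e2; rewrite -subr_eq0 /phi => /eqP <-; ring.
have t2 := two_neq0 hp op.
have ha : a = 0.
  have : 2%:R * a = 0.
    have -> : 2%:R * a = (a + b * c) + (a - b * c) by ring.
    by rewrite h1 h2 addr0.
  by move/eqP; rewrite mulf_eq0 (negPf t2) => /eqP.
have hb : b = 0.
  have : 2%:R * c * b = 0.
    have -> : 2%:R * c * b = (a + b * c) - (a - b * c) by ring.
    by rewrite h1 h2 subr0.
  move/eqP; rewrite !mulf_eq0 (negPf t2) /= => /orP [/eqP c0|/eqP //].
  by move: hc; rewrite c0 mul0r => /eqP; rewrite eq_sym oppr_eq0 oner_eq0.
by split; rewrite eqz_mod_dvd -(intr_eq0_pchar hp) -?/a -?/b ?ha ?hb.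
Qed.

Lemma cong_split (p q : nat) z w : coprime p q -> gcongr p z w -> gcongr q z w ->
  gcongr (p * q) z w.
Proof.
move=> cpq [h1 h2] [h3 h4].
have cz : coprimez p%:Z q%:Z by rewrite /coprimez /gcdz /=.
by split; rewrite PoszM zchinese_remainder // ?h1 ?h2 ?h3 ?h4.
Qed.

Lemma cong_dvd (r n : nat) z w : (r %| n)%N -> gcongr n z w -> gcongr r z w.
Proof.
move=> rn [h1 h2]; have rnz : (r%:Z %| n%:Z)%Z by [].
by split; rewrite eqz_mod_dvd; apply: dvdz_trans rnz _; rewrite -eqz_mod_dvd.
Qed.

Lemma pow_card1 (F : finFieldType) (x : F) : x != 0 -> x ^+ (#|F|.-1) = 1.
Proof.
move=> nx; apply: (mulIf nx); rewrite mul1r -exprSr.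
by rewrite prednK ?expf_card // ltnW // finNzRing_gt1.
Qed.

Lemma not_prime_mul (p q : nat) : prime p -> prime q -> ~~ prime (p * q).
Proof.
move=> pp pq; apply/negP=> /primeP [_ H].
have := H p (dvdn_mulr q (dvdnn p)); case/orP => /eqP e.
  by move: pp; rewrite e.
have q1 : q = 1%N.
  have p0 : (0 < p)%N by rewrite prime_gt0.
  by apply/eqP; rewrite -(eqn_pmul2l p0) muln1 -e.
by move: pq; rewrite q1.
Qed.

Lemma carm_back (p : nat) : prime p -> prime (p + 2) -> (p %% 4 = 3)%N ->
  gauss_carmichael (p * (p + 2)).
Proof.
move=> pp pq h4.
set q := (p + 2)%N in pq *.
have q4 : (q %% 4 = 1)%N by rewrite /q; move: h4; clear; lia.
have op : odd p by rewrite (divn_eq p 4) h4 oddD oddM andbF.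
have oq : odd q by rewrite (divn_eq q 4) q4 oddD oddM andbF.
have p1 : (1 < p)%N by apply: prime_gt1.
have [Lp cLp sLp] := pPrimePowerField pp (isT : (0 < 2)%N).
have [i hi] : exists i : Lp, i * i = -1.
  apply: sqrtm1_ff; rewrite sLp expnS expn1.
  by move: h4; clear; move=> h4; apply/dvdnP; exists ((p %/ 4) * (p %/ 4) * 4 + (p %/ 4) * 6 + 2)%N; nia.
have [Lq cLq sLq] := pPrimePowerField pq (isT : (0 < 1)%N).
have [c hc] : exists c : Lq, c * c = -1.
  by apply: sqrtm1_ff; rewrite sLq expn1; move: q4; clear; lia.
have hi' : (-i) * (-i) = -1 by rewrite mulrNN.
have hc' : (-c) * (-c) = -1 by rewrite mulrNN.
have comp : composite (p * q).
  rewrite /composite not_prime_mul // andbT.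
  by rewrite /q; move: p1; clear; nia.
have cpq : coprime p q.
  rewrite prime_coprime // dvdn_prime2 //; apply/eqP; rewrite /q; lia.
have hF : calF (p * q) = ((q.-1) * (q.-1))%N.
  have : ((p * q) %% 4 = 3)%N.
    by rewrite -modnMm h4 q4.
  by rewrite /calF => -> /=; rewrite /q; move: p1; clear; nia.
split => // z cz; split => //; split => // w hw.
rewrite hF; apply: cong_split => //.
- have hwp := cong_dvd (dvdn_mulr q (dvdnn p)) hw.
  have e1 := phi_gcongr i cLp hwp; rewrite phi_mul // phi_conj // in e1.
  have e2 := phi_gcongr (-i) cLp hwp; rewrite phi_mul // phi_conj // opprK in e2.
  have nz : phi i z * phi (-i) z != 0.
    rewrite -phi_norm // -(dvdn_pcharf cLp) -prime_coprime //.
    by move: cz; rewrite coprimeMl => /andP [].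
  have fr : phi (-i) w = phi i w ^+ p by rewrite (phi_frob hi cLp w h4).
  have ww : phi i w ^+ p.+1 = 1.
    apply: (mulIf nz); rewrite mul1r exprS -fr.
    transitivity ((phi i w * phi (-i) z) * (phi (-i) w * phi i z)); first ring.
    by rewrite e1 e2.
  apply: (phi_eq3 hi cLp h4); rewrite phi_exp // phi_one.
  by rewrite (_ : q.-1 = p.+1) ?exprM ?ww ?expr1n // /q addn2.
- have hwq := cong_dvd (dvdn_mull p (dvdnn q)) hw.
  have e1 := phi_gcongr c cLq hwq; rewrite phi_mul // phi_conj // in e1.
  have e2 := phi_gcongr (-c) cLq hwq; rewrite phi_mul // phi_conj // opprK in e2.
  have nz : phi c z * phi (-c) z != 0.
    rewrite -phi_norm // -(dvdn_pcharf cLq) -prime_coprime //.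
    by move: cz; rewrite coprimeMl => /andP [].
  have hq : q = #|Lq| by rewrite sLq expn1.
  have nw1 : phi c w != 0.
    by apply: contraNneq nz => w0; rewrite -e1 w0 !mul0r.
  have nw2 : phi (-c) w != 0.
    by apply: contraNneq nz => w0; rewrite -e2 w0 !mul0r mulr0.
  apply: (phi_eq1 hc cLq oq); rewrite !phi_exp // !phi_one exprM hq.
    by rewrite (pow_card1 nw1) expr1n.
  by rewrite (pow_card1 nw2) expr1n.
Qed.

Lemma gnorm_intr (L : nzRingType) z : (gnorm z)%:R = (z.1 ^+ 2 + z.2 ^+ 2)%:~R :> L.
Proof.
have h : (0 <= z.1 ^+ 2 + z.2 ^+ 2 :> int) by rewrite addr_ge0 // sqr_ge0.
by rewrite -[LHS]/((gnorm z)%:Z%:~R) /gnorm abszE ger0_norm.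
Qed.

Lemma phi_norm_int (L : comNzRingType) (i : L) (hi : i * i = -1) z :
  (z.1 ^+ 2 + z.2 ^+ 2)%:~R = phi i z * phi (-i) z.
Proof. by rewrite -gnorm_intr (phi_norm hi). Qed.

Lemma intr_cong_pchar' (L : nzRingType) (p : nat) (hp : p \in [pchar L]) (x y : int) :
  x%:~R = y%:~R :> L -> (x == y %[mod p%:Z])%Z.
Proof. by move=> e; rewrite eqz_mod_dvd -(intr_eq0_pchar hp) intrB e subrr. Qed.

Lemma key_div (r s : nat) (L : fieldType) (i : L) (hi : i * i = -1)
  (hr : r \in [pchar L]) (ps : prime s) (rs : r != s) (os : odd s) (a b : nat) (u : L) (m : nat) :
  phi i (a%:Z, b%:Z) = u -> phi (-i) (a%:Z, b%:Z) = u^-1 -> u != 0 -> u != -1 ->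
  (forall k, u ^+ k = 1 -> (m %| k)%N) -> gauss_carmichael (r * s) -> (m %| calF (r * s))%N.
Proof.
move=> hu hv u0 u1 hm [_ H].
have pr := pcharf_prime hr.
have [Ls cLs _] := pPrimePowerField ps (isT : (0 < 1)%N).
have crs : coprime r s by rewrite prime_coprime // dvdn_prime2.
have cz : coprimez r%:Z s%:Z by rewrite /coprimez /gcdz /=.
set A := zchinese r s a 1; set B := zchinese r s b 0.
have hA1 : (A == a %[mod r])%Z by apply/eqP; apply: zchinese_modl.
have hA2 : (A == 1 %[mod s])%Z by apply/eqP; apply: zchinese_modr.
have hB1 : (B == b %[mod r])%Z by apply/eqP; apply: zchinese_modl.
have hB2 : (B == 0 %[mod s])%Z by apply/eqP; apply: zchinese_modr.
clearbody A B.
have hi' : (-i) * (-i) = -1 by rewrite mulrNN.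
have wr : gcongr r (A, B) (a%:Z, b%:Z) by split.
have pw : phi i (A, B) = u by rewrite -hu; apply: (phi_gcongr _ hr wr).
have pw' : phi (-i) (A, B) = u^-1 by rewrite -hv; apply: (phi_gcongr _ hr wr).
have pz : phi i (1 + A, B) = 1 + u by rewrite -pw /phi /= intrD; ring.
have pz' : phi (-i) (1 + A, B) = 1 + u^-1 by rewrite -pw' /phi /= intrD; ring.
have As : A%:~R = 1 :> Ls := intr_cong_pchar cLs hA2.
have Bs : B%:~R = 0 :> Ls := intr_cong_pchar cLs hB2.
have t2 := two_neq0 cLs os.
have nu : 1 + u != 0 by rewrite addrC addr_eq0.
have nu' : 1 + u^-1 != 0.
  apply: contraNneq nu => h.
  have <- : (1 + u^-1) * u = 1 + u by rewrite mulrDl mul1r mulVf // addrC.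
  by rewrite h mul0r.
have cz' : coprime (r * s) (gnorm (1 + A, B)).
  rewrite coprimeMl !prime_coprime // (dvdn_pcharf hr) (dvdn_pcharf cLs).
  rewrite (gnorm_intr L) (phi_norm_int hi) pz pz' mulf_neq0 //=.
  rewrite (gnorm_intr Ls) /= intrD !expr2 !intrM intrD As Bs mulr0 addr0.
  by rewrite mulf_neq0 // -[1 + 1]/(2%:R).
have [_ [_ Hw]] := H _ cz'.
have nw : A%:~R ^+ 2 + B%:~R ^+ 2 = 1 :> L.
  by rewrite !expr2 -!intrM -intrD -!expr2 -[A]/((A, B).1) -[B]/((A, B).2) (phi_norm_int hi) pw pw' mulfV.
have hw : gcongr (r * s) (gmul (A, B) (gconj (1 + A, B))) (1 + A, B).
  apply: cong_split => //; split => /=.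
  - apply: (intr_cong_pchar' hr); rewrite !(intrD, intrB, intrM, intrN, mulr1z).
    transitivity (A%:~R + (A%:~R ^+ 2 + B%:~R ^+ 2) : L); first ring.
    by rewrite nw addrC.
  - apply: (intr_cong_pchar' hr); rewrite !(intrD, intrB, intrM, intrN, mulr1z); ring.
  - apply: (intr_cong_pchar' cLs); rewrite !(intrD, intrB, intrM, intrN, mulr1z) As Bs; ring.
  - apply: (intr_cong_pchar' cLs); rewrite !(intrD, intrB, intrM, intrN, mulr1z); ring.
have := Hw _ hw.
move/(cong_dvd (dvdn_mulr s (dvdnn r)))/(phi_gcongr i hr).
by rewrite phi_exp // phi_one pw; apply: hm.
Qed.

Local Close Scope ring_scope.

Definition mr (r : nat) : nat := if r %% 4 == 1 then r.-1 else r.+1.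

Lemma dvd_add_cancel (A F X B : nat) : A %| F -> F = A * X + B -> A %| B.
Proof. by move=> h e; move: h; rewrite e dvdn_addr // dvdn_mulr. Qed.

Lemma dvd_sub_cancel (A F X B : nat) : A %| F -> F + B = A * X -> A %| B.
Proof. move=> h e; have : A %| F + B by rewrite e dvdn_mulr. by rewrite (dvdn_addr _ h). Qed.

Lemma dvdn_anti (a b : nat) : a %| b -> b %| a -> a = b.
Proof. by move=> h1 h2; apply/eqP; rewrite eqn_dvd h1 h2. Qed.

Lemma mod4_cases (p : nat) : odd p -> p %% 4 = 1 \/ p %% 4 = 3.
Proof.
move=> op; have := divn_eq p 2; rewrite modn2 op /= => e; lia.
Qed.

Lemma c1a (p q : nat) : 0 < p -> 0 < q -> (p * q).-1 = p.-1 * q + q.-1. Proof. nia. Qed.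
Lemma c1b (p q : nat) : 0 < p -> 0 < q -> (p * q).-1 = q.-1 * p + p.-1. Proof. nia. Qed.
Lemma c2 (p q : nat) : 0 < p -> 0 < q -> (p * q).+1 + p.-1 = q.+1 * p. Proof. nia. Qed.
Lemma c3a (p q : nat) : 0 < p -> 0 < q -> (p * q).+1 + q.-1 = p.+1 * q. Proof. nia. Qed.
Lemma c3b (p q : nat) : 0 < p -> 0 < q -> (p * q).+1 = q.-1 * p + p.+1. Proof. nia. Qed.
Lemma c4a (p q : nat) : 0 < p -> 0 < q -> (p * q).-1 + q.+1 = p.+1 * q. Proof. nia. Qed.
Lemma c4b (p q : nat) : 0 < p -> 0 < q -> (p * q).-1 + p.+1 = q.+1 * p. Proof. nia. Qed.

Lemma arith (p q : nat) : 1 < p -> odd p -> odd q -> p < q ->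
  mr p %| calF (p * q) -> mr q %| calF (p * q) -> q = p + 2 /\ 8 %| p + q.
Proof.
move=> p1 op oq lpq hp hq.
have p0 : 0 < p by apply: odd_gt0.
have q0 : 0 < q by apply: odd_gt0.
rewrite /mr /calF in hp hq.
case: (@mod4_cases p op) => p4; case: (@mod4_cases q oq) => q4.
- have n4 : (p * q) %% 4 = 1 by rewrite -modnMm p4 q4.
  rewrite p4 q4 n4 /= in hp hq.
  have := dvdn_anti (@dvd_add_cancel _ _ _ _ hp (@c1a p q p0 q0)) (@dvd_add_cancel _ _ _ _ hq (@c1b p q p0 q0)).
  by move: lpq p0 q0; clear; lia.
- have n4 : (p * q) %% 4 = 3 by rewrite -modnMm p4 q4.
  rewrite p4 q4 n4 /= in hp hq.
  have pp : 0 < p.-1 by move: p1; clear; lia.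
  have := dvdn_leq pp (@dvd_sub_cancel _ _ _ _ hq (@c2 p q p0 q0)).
  by move: lpq p0 q0 p4; clear; lia.
- have n4 : (p * q) %% 4 = 3 by rewrite -modnMm p4 q4.
  rewrite p4 q4 n4 /= in hp hq.
  have e := dvdn_anti (@dvd_sub_cancel _ _ _ _ hp (@c3a p q p0 q0)) (@dvd_add_cancel _ _ _ _ hq (@c3b p q p0 q0)).
  move: e lpq p0 q0 p4; clear => e lpq p0 q0 p4; split; first lia.
  apply/dvdnP; exists (p %/ 4 + 1); lia.
- have n4 : (p * q) %% 4 = 1 by rewrite -modnMm p4 q4.
  rewrite p4 q4 n4 /= in hp hq.
  have := dvdn_anti (@dvd_sub_cancel _ _ _ _ hp (@c4a p q p0 q0)) (@dvd_sub_cancel _ _ _ _ hq (@c4b p q p0 q0)).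
  by move: lpq p0 q0; clear; lia.
Qed.

Local Open Scope ring_scope.

Lemma carm_div (r s : nat) : prime r -> prime s -> r != s -> odd r -> odd s ->
  gauss_carmichael (r * s) -> (mr r %| calF (r * s))%N.
Proof.
move=> pr ps rs or os hc.
have r1 : (1 < r)%N := prime_gt1 pr.
case: (@mod4_cases r or) => r4.
- have [L cL sL] := pPrimePowerField pr (isT : (0 < 1)%N).
  rewrite expn1 in sL.
  have [c hc'] : exists c : L, c * c = -1.
    by apply: sqrtm1_ff; rewrite sL; move: r4; clear; lia.
  have [g pg] := prim_root_ff L; rewrite sL in pg.
  have r5 : (4 < r)%N by move: r4 r1; clear; lia.
  have g0 : g != 0.
    apply/eqP => g0; have := prim_expr_order pg; rewrite g0 expr0n.
    rewrite (_ : (r.-1 == 0%N) = false); last by move: r5; clear; lia.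
    by move/eqP; rewrite eq_sym oner_eq0.
  have g1 : g != -1.
    apply/eqP => g1; have : g ^+ 2 = 1 by rewrite g1 expr2 mulN1r opprK.
    move/eqP; rewrite -(prim_order_dvd pg) => /(dvdn_leq (isT : (0 < 2)%N)).
    by move: r5; clear; lia.
  have c0 : c != 0.
    by apply/eqP => c0; move: hc'; rewrite c0 mul0r => /eqP; rewrite eq_sym oppr_eq0 oner_eq0.
  have t2 := two_neq0 cL or.
  have [a ha] := nat_onto cL sL ((g + g^-1) / 2%:R).
  have [b hb] := nat_onto cL sL ((g - g^-1) / (2%:R * c)).
  rewrite /mr r4 /=.
  apply: (@key_div r s L c hc' cL ps rs os a b g) => //.
  + rewrite /phi /= -[(a%:Z)%:~R]/(a%:R) -[(b%:Z)%:~R]/(b%:R) -ha -hb.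
    by field; rewrite t2 c0.
  + rewrite /phi /= -[(b%:Z)%:~R]/(b%:R) -[(a%:Z)%:~R]/(a%:R) -ha -hb.
    by field; rewrite t2 c0 g0.
  + by move=> k /eqP; rewrite -(prim_order_dvd pg).
- have [L cL sL] := pPrimePowerField pr (isT : (0 < 2)%N).
  have hn : (#|L|.-1 = r.-1 * r.+1)%N by rewrite sL; move: r1; clear; nia.
  have [i hi] : exists i : L, i * i = -1.
    apply: sqrtm1_ff; rewrite hn; apply: dvdn_mull.
    by apply/dvdnP; exists (r %/ 4 + 1)%N; move: r4; clear; lia.
  have [g pg] := prim_root_ff L; rewrite hn in pg.
  set u := g ^+ r.-1.
  have hu1 : u ^+ r.+1 = 1 by rewrite -exprM prim_expr_order.
  have u0 : u != 0.
    apply/eqP => u0; move: hu1; rewrite u0 expr0n /= => /eqP; rewrite eq_sym oner_eq0.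
    done.
  have [a [b hab]] := pair_onto cL hi r4 sL u.
  rewrite /mr (_ : (r %% 4 == 1)%N = false) /=; last by rewrite r4.
  apply: (@key_div r s L i hi cL ps rs os a b u) => //.
  + rewrite -(phi_frob hi cL _ r4) -hab; apply: (mulIf u0).
    by rewrite mulVf // -exprSr hu1.
  + apply/eqP => u1; have : u ^+ 2 = 1 by rewrite u1 expr2 mulN1r opprK.
    rewrite /u -exprM => /eqP; rewrite -(prim_order_dvd pg).
    have h0 : (0 < r.-1 * 2)%N by move: r1; clear; lia.
    by move/(dvdn_leq h0); move: r1; clear; nia.
  + move=> k; rewrite /u -exprM => /eqP; rewrite -(prim_order_dvd pg) dvdn_pmul2l //.
    by move: r1; clear; lia.
Qed.

Theorem mainTheorem11 (p q : nat) :
  prime p -> prime q -> odd p -> odd q -> (p < q)%N ->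
  (gauss_carmichael (p * q) <-> q = (p + 2)%N /\ (8 %| p + q)%N).
Proof.
move=> pp pq op oq lpq; split.
- move=> hc.
  have npq : p != q by rewrite neq_ltn lpq.
  apply: arith => //; first exact: prime_gt1.
  + exact: carm_div.
  + rewrite mulnC; apply: carm_div => //; first by rewrite eq_sym.
    by rewrite mulnC.
- move=> [eq h8]; subst q.
  apply: carm_back => //.
  move: h8 op; clear => h8 op.
  have := divn_eq p 2; rewrite modn2 op /= => e; lia.
Qed.
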